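(* Let $\mathcal S_2=\{\rho_\theta:\theta\in\Theta_2\}$, $\Theta_2\subset\mathbb{R}^{d_2}$, be a quantum statistical model and $\mathcal S_1=\{\rho_{(\theta_1,\dots,\theta_{d_1},0,\dots,0)}\}$ the submodel with $d_1\le d_2$ free parameters. Fix $\theta=(\theta_1,\dots,\theta_{d_1},0,\dots,0)\in\Theta_2$ and assume $\mathcal S_2$ is D-invariant at $\theta$. Let $\vec X=(X^1,\dots,X^{d_1})$ be Hermitian matrices lying in the real span of the SLDs $L_{\theta;1},\dots,L_{\theta;d_2}$ of $\mathcal S_2$ and satisfying $\mathrm{Tr}\,(\partial_k\rho_\theta)X^j=\delta^j_k$ for $j,k=1,\dots,d_1$. Define the $d_1\times d_2$ real matrix $P_{\vec X}$ by $(P_{\vec X})^k_l=\mathrm{Tr}\,(\partial_l\rho_\theta)X^k$ ($k\le d_1$, $l\le d_2$). Then for every real symmetric positive definite $d_1\times d_1$ matrix $G$, $$C_\theta(G,\vec X)=C^R_{\theta,2}\big(P_{\vec X}^TGP_{\vec X}\big),$$ where $C^R_{\theta,2}$ denotes the RLD bound of the model $\mathcal S_2$ at $\theta$ (evaluated at the positive semidefinite $d_2\times d_2$ weight $P_{\vec X}^TGP_{\vec X}$).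
   Context: A quantum statistical model is a family of strictly positive density matrices on a finite-dimensional Hilbert space depending smoothly on a parameter in an open subset of $\mathbb{R}^d$; $\partial_k=\partial/\partial\theta^k$. Notation: $X\circ Y=(XY+YX)/2$; $\langle X,Y\rangle_\theta=\mathrm{Tr}\,\rho_\theta(X^*\circ Y)$. SLDs $L_{\theta;j}$: Hermitian with $\partial_j\rho_\theta=\rho_\theta\circ L_{\theta;j}$. RLDs $\tilde L_{\theta;j}$: $\partial_j\rho_\theta=\rho_\theta\tilde L_{\theta;j}$; RLD Fisher matrix $\tilde J_{\theta;j,k}=\mathrm{Tr}\,\rho_\theta\tilde L_{\theta;k}\tilde L_{\theta;j}^*$. The D-operator $\mathcal D_\theta$ is defined on Hermitian matrices by $\rho_\theta\circ\mathcal D_\theta(X)=i[X,\rho_\theta]$; the model is D-invariant at $\theta$ if the real span of its SLDs at $\theta$ is mapped into itself by $\mathcal D_\theta$. For a complex matrix $W$: $\mathrm{Re}\,W=(W+\bar W)/2$, $\mathrm{Im}\,W=(W-\bar W)/(2i)$, $|A|=(A^*A)^{1/2}$. RLD bound with weight $H$ (real symmetric positive semidefinite): $C^R_\theta(H)=\mathrm{tr}\sqrt H\,\mathrm{Re}(\tilde J_\theta^{-1})\sqrt H+\mathrm{tr}|\sqrt H\,\mathrm{Im}(\tilde J_\theta^{-1})\sqrt H|$. For a tuple $\vec X$ of Hermitian matrices, $Z_\theta^{k,j}(\vec X)=\mathrm{Tr}\,\rho_\theta X^kX^j$ and $C_\theta(G,\vec X)=\mathrm{tr}\sqrt G\,\mathrm{Re}\,Z_\theta(\vec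 X)\sqrt G+\mathrm{tr}|\sqrt G\,\mathrm{Im}\,Z_\theta(\vec X)\sqrt G|$. *)

(* Defs.v *)
From HB Require Import structures.
From mathcomp Require Import all_boot all_order all_algebra.
From mathcomp Require Import all_classical all_reals.
From mathcomp Require Import topology normedtype derive.
From mathcomp Require Import complex.
Set Implicit Arguments. Unset Strict Implicit. Unset Printing Implicit Defensive.
Import Order.TTheory GRing.Theory Num.Theory ComplexField.
Import numFieldNormedType.Exports.
Local Open Scope ring_scope.
Local Open Scope complex_scope.

Section QDefs.
Variable R : realType.
Local Notation C := R[i].

Definition conjM m n (W : 'M[C]_(m, n)) : 'M[C]_(m, n) := map_mx (@conjc R) W.
Definition dag m n (W : 'M[C]_(m, n)) : 'M[C]_(n, m) := (conjM W)^T.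

Definition herm n (A : 'M[C]_n) : Prop := dag A = A.

Definition psd n (A : 'M[C]_n) : Prop :=
  herm A /\ forall v : 'cV[C]_n, 0 <= (dag v *m A *m v) 0 0.
Definition posdef n (A : 'M[C]_n) : Prop :=
  herm A /\ forall v : 'cV[C]_n, v != 0 -> 0 < (dag v *m A *m v) 0 0.

Definition strictly_pos_density n (A : 'M[C]_n) : Prop :=
  posdef A /\ \tr A = 1.

Definition jprod n (X Y : 'M[C]_n) : 'M[C]_n := (2%:R)^-1 *: (X *m Y + Y *m X).

Definition ReM m n (W : 'M[C]_(m, n)) : 'M[C]_(m, n) := (2%:R)^-1 *: (W + conjM W).
Definition ImM m n (W : 'M[C]_(m, n)) : 'M[C]_(m, n) :=
  (2%:R * 'i)^-1 *: (W - conjM W).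

Definition sqrtm n (A : 'M[C]_n) : 'M[C]_n :=
  match boolp.pselect (exists B : 'M[C]_n, psd B /\ B *m B = A) with
  | left h => projT1 (boolp.cid h)
  | right _ => 0
  end.

Definition absm n (A : 'M[C]_n) : 'M[C]_n := sqrtm (dag A *m A).

Definition cplxM m n (M : 'M[R]_(m, n)) : 'M[C]_(m, n) := map_mx (fun x => x%:C) M.

Definition real_sym_posdef n (G : 'M[R]_n) : Prop :=
  G^T = G /\ forall v : 'cV[R]_n, v != 0 -> 0 < (v^T *m G *m v) 0 0.

Definition pderiv d N (rho : 'rV[R]_d -> 'M[C]_N) (theta : 'rV[R]_d) (k : 'I_d)
  : 'M[C]_N :=
  \matrix_(i, j)
    ((derive (fun t => @complex.Re R (rho t i j)) theta (delta_mx 0 k))%:C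
     + 'i * (derive (fun t => @complex.Im R (rho t i j)) theta (delta_mx 0 k))%:C).

Definition is_SLD N (rho dr X : 'M[C]_N) : Prop := herm X /\ dr = jprod rho X.
Definition is_RLD N (rho dr X : 'M[C]_N) : Prop := dr = rho *m X.

Definition in_real_span d N (L : 'I_d -> 'M[C]_N) (Y : 'M[C]_N) : Prop :=
  exists c : 'I_d -> R, Y = \sum_(l < d) (c l)%:C *: L l.

Definition is_Dop N (rho X Y : 'M[C]_N) : Prop :=
  herm Y /\ jprod rho Y = 'i *: (X *m rho - rho *m X).

Definition D_invariant d N (rho : 'M[C]_N) (L : 'I_d -> 'M[C]_N) : Prop :=
  forall X Y, in_real_span L X -> is_Dop rho X Y -> in_real_span L Y.

Definition RLD_fisher d N (rho : 'M[C]_N) (Lt : 'I_d -> 'M[C]_N) : 'M[C]_d :=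
  \matrix_(j, k) \tr (rho *m Lt k *m dag (Lt j)).

Definition holevo_form d (H W : 'M[C]_d) : C :=
  \tr (sqrtm H *m ReM W *m sqrtm H) + \tr (absm (sqrtm H *m ImM W *m sqrtm H)).

Definition RLD_bound d N (rho : 'M[C]_N) (Lt : 'I_d -> 'M[C]_N) (H : 'M[C]_d) : C :=
  holevo_form H (invmx (RLD_fisher rho Lt)).

Definition Zmat d N (rho : 'M[C]_N) (X : 'I_d -> 'M[C]_N) : 'M[C]_d :=
  \matrix_(k, j) \tr (rho *m X k *m X j).

Definition C_bound d N (rho : 'M[C]_N) (G : 'M[C]_d) (X : 'I_d -> 'M[C]_N) : C :=
  holevo_form G (Zmat rho X).

End QDefs.

(* Main.v *)
Require Import Defs.
From HB Require Import structures.
From mathcomp Require Import all_boot all_order all_algebra.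
From mathcomp Require Import all_classical all_reals.
From mathcomp Require Import topology normedtype derive.
From mathcomp Require Import complex.
Import Order.TTheory GRing.Theory Num.Theory ComplexField.
Import numFieldNormedType.Exports.
Local Open Scope ring_scope.
Local Open Scope complex_scope.
Local Open Scope classical_set_scope.
Set Implicit Arguments. Unset Strict Implicit. Unset Printing Implicit Defensive.
Section Q0.
Variable R : realType.
Local Notation C := R[i].
Local Notation cj := (@conjc R).
Lemma cjK (x : C) : cj (cj x) = x. Proof. by case: x => a b /=; rewrite opprK. Qed.
Lemma cj_nat n : cj (n%:R) = n%:R :> C.
Proof. exact: (@conjc_nat (R : rcfType)). Qed.
Lemma cj0 : cj 0 = 0. Proof. exact: (@conjc0 (R : rcfType)). Qed.
Lemma cj1 : cj 1 = 1. Proof. exact: (@conjc1 (R : rcfType)). Qed.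
Lemma cjD (x y : C) : cj (x + y) = cj x + cj y.
Proof. exact: (@rmorphD _ _ (@conjc R)). Qed.
Lemma cjM (x y : C) : cj (x * y) = cj x * cj y.
Proof. exact: (@rmorphM _ _ (@conjc R)). Qed.
Lemma cjN (x : C) : cj (- x) = - cj x.
Proof. exact: (@rmorphN _ _ (@conjc R)). Qed.
Lemma cjB (x y : C) : cj (x - y) = cj x - cj y.
Proof. by rewrite cjD cjN. Qed.
Lemma cjV (x : C) : cj (x^-1) = (cj x)^-1.
Proof. exact: (@conjc_inv (R : rcfType)). Qed.
Lemma cj_real (x : R) : cj (x%:C) = x%:C.
Proof. by rewrite /= oppr0. Qed.
Lemma cj_i : cj 'i = - 'i.
Proof. by apply/eqP; rewrite eq_complex /= oppr0 !eqxx. Qed.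
Lemma cj_sum I (r : seq I) (P : pred I) (F : I -> C) :
  cj (\sum_(i <- r | P i) F i) = \sum_(i <- r | P i) cj (F i).
Proof. exact: (@rmorph_sum _ _ (@conjc R)). Qed.
Lemma mul_cj_ge0 (x : C) : 0 <= cj x * x.
Proof. by rewrite mulrC; exact: (@mulcJ_ge0 (R : rcfType)). Qed.
Lemma numconjE (x : C) : Num.conj x = cj x.
Proof. by []. Qed.
End Q0.
Section Q.
Variable R : realType.
Local Notation C := R[i].
Local Notation cj := (@conjc R).

Lemma conjM_mul m n p (A : 'M[C]_(m,n)) (B : 'M[C]_(n,p)) :
  conjM (A *m B) = conjM A *m conjM B.
Proof. exact: map_mxM. Qed.
Lemma conjMK m n (A : 'M[C]_(m,n)) : conjM (conjM A) = A.
Proof. by apply/matrixP=> i j; rewrite !mxE cjK. Qed.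
Lemma conjM_tr m n (A : 'M[C]_(m,n)) : conjM (A^T) = (conjM A)^T.
Proof. by apply/matrixP=> i j; rewrite !mxE. Qed.
Lemma conjMD m n (A B : 'M[C]_(m,n)) : conjM (A + B) = conjM A + conjM B.
Proof. by apply/matrixP=> i j; rewrite !mxE cjD. Qed.
Lemma conjMN m n (A : 'M[C]_(m,n)) : conjM (- A) = - conjM A.
Proof. by apply/matrixP=> i j; rewrite !mxE cjN. Qed.
Lemma conjMZ m n a (A : 'M[C]_(m,n)) : conjM (a *: A) = cj a *: conjM A.
Proof. by apply/matrixP=> i j; rewrite !mxE cjM. Qed.
Lemma conjM_sum m n I (r : seq I) (P : pred I) (F : I -> 'M[C]_(m,n)) :
  conjM (\sum_(i <- r | P i) F i) = \sum_(i <- r | P i) conjM (F i).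
Proof.
elim/big_rec2: _ => [|i x y _ H]; last by rewrite conjMD H.
by apply/matrixP=> i j; rewrite !mxE cj0.
Qed.

Lemma dagM m n p (A : 'M[C]_(m,n)) (B : 'M[C]_(n,p)) :
  dag (A *m B) = dag B *m dag A.
Proof. by rewrite /dag conjM_mul trmx_mul. Qed.
Lemma dagK m n (A : 'M[C]_(m,n)) : dag (dag A) = A.
Proof. by rewrite /dag conjM_tr trmxK conjMK. Qed.
Lemma dagD m n (A B : 'M[C]_(m,n)) : dag (A + B) = dag A + dag B.
Proof. by rewrite /dag conjMD linearD. Qed.
Lemma dagN m n (A : 'M[C]_(m,n)) : dag (- A) = - dag A.
Proof. by rewrite /dag conjMN linearN. Qed.
Lemma dagB m n (A B : 'M[C]_(m,n)) : dag (A - B) = dag A - dag B.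
Proof. by rewrite dagD dagN. Qed.
Lemma dagZ m n a (A : 'M[C]_(m,n)) : dag (a *: A) = cj a *: dag A.
Proof. by rewrite /dag conjMZ linearZ. Qed.
Lemma dag_sum m n I (r : seq I) (P : pred I) (F : I -> 'M[C]_(m,n)) :
  dag (\sum_(i <- r | P i) F i) = \sum_(i <- r | P i) dag (F i).
Proof. by rewrite /dag conjM_sum linear_sum. Qed.
Lemma dag1 n : dag (1%:M : 'M[C]_n) = 1%:M.
Proof. by apply/matrixP=> i j; rewrite !mxE cj_nat eq_sym. Qed.
Lemma dag0 m n : dag (0 : 'M[C]_(m,n)) = 0.
Proof. by apply/matrixP=> i j; rewrite !mxE cj0. Qed.
Lemma dagE m n (A : 'M[C]_(m,n)) i j : dag A i j = cj (A j i).
Proof. by rewrite !mxE. Qed.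
Lemma dag_diag n (d : 'rV[C]_n) : dag (diag_mx d) = diag_mx (conjM d).
Proof.
apply/matrixP=> i j; rewrite !mxE; case: (eqVneq i j) => [->|ne].
  by rewrite ?eqxx ?mulr1n.
by rewrite !mulr0n cj0.
Qed.
Lemma dag_tr m n (A : 'M[C]_(m,n)) : dag (A^T) = conjM A.
Proof. by rewrite /dag conjM_tr trmxK. Qed.
Lemma tr_dag n (A : 'M[C]_n) : \tr (dag A) = cj (\tr A).
Proof. by rewrite /mxtrace cj_sum; apply: eq_bigr=> i _; rewrite !mxE. Qed.
Lemma tr_conjM n (A : 'M[C]_n) : \tr (conjM A) = cj (\tr A).
Proof. by rewrite /mxtrace cj_sum; apply: eq_bigr=> i _; rewrite !mxE. Qed.

End Q.
Section Q2.
Variable R : realType.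
Local Notation C := R[i].
Local Notation cj := (@conjc R).

Lemma dag_tstar m n (A : 'M[C]_(m,n)) : dag A = map_mx Num.conj (A^T).
Proof. by apply/matrixP=> i j; rewrite !mxE. Qed.

Lemma herm_spec n (A : 'M[C]_n) : herm A ->
  exists U (d : 'rV[C]_n), [/\ dag U *m U = 1%:M, U *m dag U = 1%:M &
     A = dag U *m diag_mx d *m U].
Proof.
move=> hA; have nA : A \is normalmx.
  by apply/normalmxP; rewrite -!dag_tstar hA.
move/orthomx_spectralP: nA; set U := spectralmx A; set d := spectral_diag A => E.
have Uu : U \is unitarymx by apply: spectral_unitarymx.
have iU : invmx U = dag U by rewrite invmx_unitary // dag_tstar.
exists U, d; split.
- by rewrite -iU mulVmx // unitarymx_unit.
- by rewrite dag_tstar; apply/unitarymxP.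
- by rewrite -iU.
Qed.

Lemma quad_diag n (d : 'rV[C]_n) (w : 'cV[C]_n) :
  (dag w *m diag_mx d *m w) 0 0 = \sum_i cj (w i 0) * d 0 i * w i 0.
Proof. by rewrite mxE; apply: eq_bigr => i _; rewrite mul_mx_diag !mxE. Qed.

Lemma quad_conj n (U : 'M[C]_n) (d : 'rV[C]_n) (v : 'cV[C]_n) :
  dag v *m (dag U *m diag_mx d *m U) *m v
  = dag (U *m v) *m diag_mx d *m (U *m v).
Proof. by rewrite dagM !mulmxA. Qed.

Lemma quad_unit_vec n (U : 'M[C]_n) (d : 'rV[C]_n) (i : 'I_n) :
  U *m dag U = 1%:M ->
  (dag (dag (row i U)) *m (dag U *m diag_mx d *m U) *m dag (row i U)) 0 0 = d 0 i.
Proof.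
move=> UU; rewrite quad_conj.
have -> : U *m dag (row i U) = dag (row i (1%:M : 'M[C]_n)).
  by rewrite -{1}[U]dagK -dagM -row_mul UU.
rewrite row1 quad_diag.
have eE : forall k, dag (delta_mx 0 i : 'rV[C]_n) k 0 = (k == i)%:R.
  by move=> k; rewrite dagE mxE cj_nat eqxx andTb.
have eE2 : forall k, cj (dag (delta_mx 0 i : 'rV[C]_n) k 0) = (k == i)%:R.
  by move=> k; rewrite dagE cjK mxE eqxx andTb.
rewrite (bigD1 i) //= big1.
  by rewrite addr0 eE2 eE eqxx mulr1 mul1r.
by move=> k ki; rewrite eE (negbTE ki) mulr0.
Qed.

Lemma row_unitary_neq0 n (U : 'M[C]_n) (i : 'I_n) :
  U *m dag U = 1%:M -> dag (row i U) != 0.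
Proof.
move=> UU; apply/eqP=> H.
have : row i (U *m dag U) = 0 by rewrite row_mul -[row i U]dagK H dag0 mul0mx.
rewrite UU row1 => /matrixP /(_ 0 i); rewrite !mxE !eqxx => /eqP.
by rewrite /= oner_eq0.
Qed.

Lemma psd_spec_ge0 n (A U : 'M[C]_n) d : psd A -> U *m dag U = 1%:M ->
  A = dag U *m diag_mx d *m U -> forall i, 0 <= d 0 i.
Proof.
move=> [_ pA] UU E i; have := pA (dag (row i U)).
by rewrite E quad_unit_vec.
Qed.

Lemma posdef_spec_gt0 n (A U : 'M[C]_n) d : posdef A -> U *m dag U = 1%:M ->
  A = dag U *m diag_mx d *m U -> forall i, 0 < d 0 i.
Proof.
move=> [_ pA] UU E i; have := pA (dag (row i U)) (row_unitary_neq0 i UU).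
by rewrite E quad_unit_vec.
Qed.

End Q2.
Section Q3.
Variable R : realType.
Local Notation C := R[i].
Local Notation cj := (@conjc R).

Definition csqrt (a : C) : C := (Num.sqrt (complex.Re a))%:C.

Lemma ge0_CE (a : C) : 0 <= a -> a = (complex.Re a)%:C /\ 0 <= complex.Re a.
Proof.
case: a => x y; rewrite lecE /= => /andP[/eqP -> h]; split => //.
Qed.

Lemma csqrtK (a : C) : 0 <= a -> csqrt a * csqrt a = a.
Proof.
move=> /ge0_CE [E h]; rewrite /csqrt -rmorphM /= -expr2 sqr_sqrtr //.
Qed.

Lemma csqrt_ge0 (a : C) : 0 <= csqrt a.
Proof. by rewrite /csqrt lecR sqrtr_ge0. Qed.

Lemma csqrt_sq (m : C) : 0 <= m -> csqrt (m * m) = m.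
Proof.
move=> /ge0_CE [E h]; rewrite E /csqrt -rmorphM /=.
by rewrite -expr2 sqrtr_sqr ger0_norm.
Qed.

Lemma cj_ge0 (a : C) : 0 <= a -> cj a = a.
Proof. by move=> /ge0_CE [E _]; rewrite E cj_real. Qed.

Definition mpow n (k : nat) (A : 'M[C]_n) : 'M[C]_n := iter k (mulmx A) 1%:M.

Definition hornerM n (A : 'M[C]_n) (p : {poly C}) : 'M[C]_n :=
  \sum_(i < size p) p`_i *: mpow i A.

Lemma mpow_conj n (U D : 'M[C]_n) k : dag U *m U = 1%:M -> U *m dag U = 1%:M ->
  mpow k (dag U *m D *m U) = dag U *m mpow k D *m U.
Proof.
move=> h1 h2; elim: k => [|k IH] /=; first by rewrite mulmx1 h1.
rewrite [mpow k _]IH -!mulmxA; congr (_ *m (_ *m _)).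
by rewrite mulmxA h2 mul1mx.
Qed.

Lemma hornerM_conj n (U D : 'M[C]_n) p : dag U *m U = 1%:M -> U *m dag U = 1%:M ->
  hornerM (dag U *m D *m U) p = dag U *m hornerM D p *m U.
Proof.
move=> h1 h2; rewrite /hornerM mulmx_sumr mulmx_suml; apply: eq_bigr => i _.
by rewrite mpow_conj // -scalemxAr -scalemxAl.
Qed.

Lemma mpow_diag n (d : 'rV[C]_n) k :
  mpow k (diag_mx d) = diag_mx (\row_j (d 0 j ^+ k)).
Proof.
elim: k => [|k IH] /=.
  rewrite -diag_const_mx; congr diag_mx; apply/rowP=> j; by rewrite !mxE.
rewrite [mpow k _]IH mulmx_diag; congr diag_mx; apply/rowP=> j.
by rewrite !mxE exprS.
Qed.

Lemma hornerM_diag n (d : 'rV[C]_n) p :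
  hornerM (diag_mx d) p = diag_mx (\row_j p.[d 0 j]).
Proof.
apply/matrixP=> i j; rewrite /hornerM summxE !mxE.
under eq_bigr do rewrite mpow_diag !mxE.
case: (eqVneq i j) => [->|ne].
  by rewrite mulr1n horner_coef; apply: eq_bigr => k _; rewrite mulr1n.
by rewrite mulr0n big1 // => k _; rewrite mulr0n mulr0.
Qed.

Lemma tr_hornerM n (A : 'M[C]_n) p :
  \tr (hornerM A p) = \sum_(i < size p) p`_i * \tr (mpow i A).
Proof. by rewrite /hornerM raddf_sum; apply: eq_bigr => i _; exact: mxtraceZ. Qed.

Lemma psd_conj_diag n (U : 'M[C]_n) (d : 'rV[C]_n) :
  (forall j, 0 <= d 0 j) -> psd (dag U *m diag_mx d *m U).
Proof.
move=> hd; split.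
  rewrite /herm !dagM dagK dag_diag -mulmxA; congr (_ *m (_ *m _)).
  by congr diag_mx; apply/rowP=> j; rewrite !mxE cj_ge0.
move=> v; rewrite quad_conj quad_diag; apply: sumr_ge0 => j _.
by rewrite mulrAC mulr_ge0 // mul_cj_ge0.
Qed.

Lemma sqrtm_spec n (K : 'M[C]_n) : psd K -> psd (sqrtm K) /\ sqrtm K *m sqrtm K = K.
Proof.
move=> pK.
have ex : exists B : 'M[C]_n, psd B /\ B *m B = K.
  have [U [d [h1 h2 E]]] := herm_spec pK.1.
  have hd := psd_spec_ge0 pK h2 E.
  exists (dag U *m diag_mx (\row_j csqrt (d 0 j)) *m U); split.
    by apply: psd_conj_diag => j; rewrite mxE csqrt_ge0.
  rewrite -!mulmxA [U *m (dag U *m _)]mulmxA h2 mul1mx.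
  rewrite [diag_mx _ *m (diag_mx _ *m _)]mulmxA mulmx_diag [RHS]E !mulmxA.
  by congr (_ *m diag_mx _ *m _); apply/rowP=> j; rewrite !mxE csqrtK.
rewrite /sqrtm; case: boolp.pselect => [h|//].
by case: (boolp.cid h).
Qed.

Lemma eigen_in_spec n (K U : 'M[C]_n) (d : 'rV[C]_n) (v : 'rV[C]_n) a :
  dag U *m U = 1%:M -> U *m dag U = 1%:M -> K = dag U *m diag_mx d *m U ->
  v != 0 -> v *m K = a *: v -> exists j, a = d 0 j.
Proof.
move=> h1 h2 E vn0 ev.
have wn0 : v *m dag U != 0.
  apply: contra vn0 => /eqP w0; apply/eqP.
  by rewrite -[v]mulmx1 -h1 mulmxA w0 mul0mx.
have ew : v *m dag U *m diag_mx d = a *: (v *m dag U).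
  have -> : v *m dag U *m diag_mx d = v *m K *m dag U.
    by rewrite E !mulmxA -(mulmxA _ U) h2 mulmx1.
  by rewrite ev scalemxAl.
move: wn0 ew; set w := v *m dag U => wn0 ew; clearbody w.
case/rV0Pn: wn0 => j wj; exists j.
move/rowP: ew => /(_ j); rewrite mul_mx_diag !mxE => h.
by apply: (mulIf wj); rewrite -h mulrC.
Qed.

Lemma sqrt_poly n (K B : 'M[C]_n) (p : {poly C}) : psd B -> B *m B = K ->
  (forall a : C, (exists2 v : 'rV[C]_n, v != 0 & v *m K = a *: v) -> p.[a] = csqrt a) ->
  hornerM K p = B.
Proof.
move=> pB BB hp.
have [U [d [h1 h2 E]]] := herm_spec pB.1.
have hd := psd_spec_ge0 pB h2 E.
have EK : K = dag U *m diag_mx (\row_j (d 0 j * d 0 j)) *m U.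
  rewrite -BB E -!mulmxA [U *m (dag U *m _)]mulmxA h2 mul1mx.
  by rewrite [diag_mx _ *m (diag_mx _ *m _)]mulmxA mulmx_diag !mulmxA.
rewrite EK hornerM_conj // hornerM_diag E; congr (_ *m diag_mx _ *m _).
apply/rowP=> j; rewrite !mxE.
have -> : p.[d 0 j * d 0 j] = csqrt (d 0 j * d 0 j).
  apply: hp; exists (row j U).
    apply: contraNneq (row_unitary_neq0 j h2) => ->; by rewrite dag0.
  rewrite EK !mulmxA -row_mul h2 row1.
  set e := \row_j0 (d 0 j0 * d 0 j0).
  have -> : ('e_j : 'rV[C]_n) *m diag_mx e = (e 0 j) *: 'e_j.
    apply/matrixP => i0 k; rewrite mul_mx_diag !mxE.
    by case: (eqVneq k j) => [->|_]; rewrite ?andbF ?mulr0 ?mul0r // mulrC.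
  by rewrite -scalemxAl -rowE mxE.
by rewrite csqrt_sq.
Qed.

End Q3.
Section Q4.
Variable R : realType.
Local Notation C := R[i].

Lemma interp (s : seq C) (f : C -> C) :
  exists p : {poly C}, forall x, x \in s -> p.[x] = f x.
Proof.
elim: s => [|a s [p hp]]; first by exists 0.
case: (boolP (a \in s)) => ins.
  by exists p => x; rewrite inE => /orP[/eqP ->|]; [apply: hp|apply: hp].
pose q := \prod_(b <- s) ('X - b%:P).
have qE : forall x, q.[x] = \prod_(b <- s) (x - b).
  by move=> x; rewrite /q horner_prod; apply: eq_bigr => b _; rewrite hornerXsubC.
have qa : q.[a] != 0.
  rewrite qE prodf_seq_eq0; apply/hasPn => b bs /=; rewrite subr_eq0.
  by apply: contra ins => /eqP ->.
have qx : forall x, x \in s -> q.[x] = 0.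
  move=> x xs; apply/eqP; rewrite qE prodf_seq_eq0; apply/hasP; exists x => //.
  by rewrite /= subrr.
exists (p + ((f a - p.[a]) / q.[a]) *: q) => x; rewrite inE hornerD hornerZ.
case/orP => [/eqP ->|xs]; first by rewrite divfK // addrC subrK.
by rewrite (qx x xs) mulr0 addr0 hp.
Qed.

Lemma eigen_list n (K : 'M[C]_n) : psd K ->
  exists s : seq C, forall a, (exists2 v : 'rV[C]_n, v != 0 & v *m K = a *: v) -> a \in s.
Proof.
move=> pK; have [U [d [h1 h2 E]]] := herm_spec pK.1.
exists [seq d 0 j | j <- enum 'I_n] => a [v vn0 ev].
have [j ->] := eigen_in_spec h1 h2 E vn0 ev.
by apply/mapP; exists j; rewrite ?mem_enum.
Qed.

Lemma tr_sqrtm_eq m n (K1 : 'M[C]_m) (K2 : 'M[C]_n) : psd K1 -> psd K2 ->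
  (forall k, (0 < k)%N -> \tr (mpow k K1) = \tr (mpow k K2)) ->
  \tr (sqrtm K1) = \tr (sqrtm K2).
Proof.
move=> p1 p2 htr.
have [s1 hs1] := eigen_list p1; have [s2 hs2] := eigen_list p2.
have [p hp] := interp (0 :: s1 ++ s2) (@csqrt R).
have [q1 e1] := sqrtm_spec p1; have [q2 e2] := sqrtm_spec p2.
rewrite -(sqrt_poly (p := p) q1 e1); last first.
  by move=> a /hs1 h; apply: hp; rewrite inE mem_cat h orbT.
rewrite -(sqrt_poly (p := p) q2 e2); last first.
  by move=> a /hs2 h; apply: hp; rewrite inE mem_cat h !orbT.
rewrite !tr_hornerM; apply: eq_bigr => i _.
case: (posnP i) => [i0|ip]; last by rewrite htr.
have -> : p`_i = 0.
  rewrite i0 -horner_coef0 hp ?mem_head // /csqrt /= sqrtr0.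
  by [].
by rewrite !mul0r.
Qed.

End Q4.
Section Q5.
Variable R : realType.
Local Notation C := R[i].
Local Notation cj := (@conjc R).

Lemma mpowSr n (A : 'M[C]_n) k : mpow k.+1 A = mpow k A *m A.
Proof.
have e : forall j, mpow j.+1 A = A *m mpow j A by [].
elim: k => [|k IH]; first by rewrite /= mulmx1 mul1mx.
by rewrite {1}e IH mulmxA -e IH.
Qed.

Lemma mpow_shift m n (Y : 'M[C]_(m,n)) (Z : 'M[C]_(n,m)) k :
  mpow k.+1 (Y *m Z) = Y *m mpow k (Z *m Y) *m Z.
Proof.
have e : forall l (A : 'M[C]_l) j, mpow j.+1 A = A *m mpow j A by [].
elim: k => [|k IH]; first by rewrite /= !mulmx1.
by rewrite e IH e !mulmxA.
Qed.

Lemma tr_mpow_cyc m n (Y : 'M[C]_(m,n)) (Z : 'M[C]_(n,m)) k :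
  \tr (mpow k.+1 (Y *m Z)) = \tr (mpow k.+1 (Z *m Y)).
Proof.
rewrite mpow_shift mxtrace_mulC mulmxA mxtrace_mulC mulmxA.
by rewrite -mulmxA -mpowSr.
Qed.

Lemma quad_ge0 n (w : 'cV[C]_n) : 0 <= (dag w *m w) 0 0.
Proof.
rewrite mxE; apply: sumr_ge0 => i _; rewrite dagE; exact: mul_cj_ge0.
Qed.

Lemma psd_dagYY m n (Y : 'M[C]_(m,n)) : psd (dag Y *m Y).
Proof.
split; first by rewrite /herm dagM dagK.
move=> v; have -> : dag v *m (dag Y *m Y) *m v = dag (Y *m v) *m (Y *m v).
  by rewrite dagM !mulmxA.
exact: quad_ge0.
Qed.

End Q5.
Section Q6.
Variable R : realType.
Local Notation C := R[i].
Local Notation cj := (@conjc R).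

Lemma ReM_PVP d1 d2 (P : 'M[C]_(d1,d2)) (V : 'M[C]_d2) : conjM P = P ->
  Defs.ReM (P *m conjM V *m P^T) = P *m Defs.ReM V *m P^T.
Proof.
move=> cP; rewrite /Defs.ReM !conjM_mul conjMK conjM_tr cP.
by rewrite -scalemxAr -scalemxAl mulmxDr mulmxDl addrC.
Qed.

Lemma ImM_PVP d1 d2 (P : 'M[C]_(d1,d2)) (V : 'M[C]_d2) : conjM P = P ->
  Defs.ImM (P *m conjM V *m P^T) = - (P *m Defs.ImM V *m P^T).
Proof.
move=> cP; rewrite /Defs.ImM !conjM_mul conjMK conjM_tr cP.
by rewrite -scalemxAr -scalemxAl mulmxBr mulmxBl -scalerN opprB.
Qed.

Lemma absmN n (Y : 'M[C]_n) : absm (- Y) = absm Y.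
Proof. by rewrite /absm dagN mulNmx mulmxN opprK. Qed.

Lemma holevo_transform d1 d2 (G0 : 'M[C]_d1) (P : 'M[C]_(d1,d2)) (V : 'M[C]_d2) :
  psd G0 -> conjM P = P ->
  holevo_form G0 (P *m conjM V *m P^T) = holevo_form (P^T *m G0 *m P) V.
Proof.
move=> pG cP.
have dP : dag P = P^T by rewrite /dag cP.
have dPT : dag (P^T) = P by rewrite dag_tr cP.
set H := P^T *m G0 *m P.
have pH : psd H.
  split; first by rewrite /herm /H !dagM dPT pG.1 dP mulmxA.
  move=> v; have -> : dag v *m H *m v = dag (P *m v) *m G0 *m (P *m v).
    by rewrite /H dagM dP !mulmxA.
  exact: pG.2.
have [qS eS] := sqrtm_spec pG; have [qT eT] := sqrtm_spec pH.
set S := sqrtm G0 in qS eS *; set T := sqrtm H in qT eT *.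
have hS : dag S = S := qS.1.
have hT : dag T = T := qT.1.
rewrite /holevo_form ReM_PVP // ImM_PVP //; congr (_ + _).
  set Re := Defs.ReM V.
  have -> : S *m (P *m Re *m P^T) *m S = (S *m P *m Re) *m (P^T *m S).
    by rewrite !mulmxA.
  rewrite mxtrace_mulC !mulmxA -(mulmxA _ S S) eS.
  by rewrite [RHS]mxtrace_mulC mulmxA eT.
rewrite mulmxN mulNmx absmN.
set Mi := Defs.ImM V.
set A := S *m P.
have dA : dag A = P^T *m S by rewrite /A dagM hS dP.
have AA : dag A *m A = H by rewrite dA /A mulmxA -(mulmxA _ S S) eS.
have YE : S *m (P *m Mi *m P^T) *m S = A *m Mi *m dag A by rewrite dA /A !mulmxA.
clearbody A.
set Q := dag Mi *m H *m Mi.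
have K1E : dag (S *m (P *m Mi *m P^T) *m S) *m (S *m (P *m Mi *m P^T) *m S)
           = A *m (Q *m dag A).
  rewrite YE !dagM dagK -!mulmxA; congr (_ *m _).
  rewrite /Q !mulmxA; congr (_ *m _ *m _).
  by rewrite -mulmxA AA /H !mulmxA.
have K2E : dag (T *m Mi *m T) *m (T *m Mi *m T) = T *m (Q *m T).
  rewrite !dagM hT -!mulmxA; congr (_ *m _).
  rewrite /Q !mulmxA; congr (_ *m _ *m _).
  by rewrite -mulmxA eT /H !mulmxA.
rewrite /absm K1E K2E; apply: tr_sqrtm_eq.
- by have := psd_dagYY (S *m (P *m Mi *m P^T) *m S); rewrite K1E.
- by have h := psd_dagYY (T *m Mi *m T); rewrite K2E in h; exact h.
case=> // k _; rewrite tr_mpow_cyc [RHS]tr_mpow_cyc.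
by rewrite -mulmxA AA -mulmxA eT.
Qed.

End Q6.
Section Q7.
Variable R : realType.
Local Notation C := R[i].
Local Notation cj := (@conjc R).

Lemma jprodD n (r A B : 'M[C]_n) : jprod r (A + B) = jprod r A + jprod r B.
Proof. by rewrite /jprod mulmxDr mulmxDl addrACA scalerDr. Qed.
Lemma jprodZ n (r A : 'M[C]_n) a : jprod r (a *: A) = a *: jprod r A.
Proof. by rewrite /jprod -scalemxAr -scalemxAl -scalerDr !scalerA mulrC. Qed.
Lemma jprodN n (r A : 'M[C]_n) : jprod r (- A) = - jprod r A.
Proof. by rewrite -scaleN1r jprodZ scaleN1r. Qed.
Lemma jprod_sum n (r : 'M[C]_n) I (s : seq I) (F : I -> 'M[C]_n) :
  jprod r (\sum_(i <- s) F i) = \sum_(i <- s) jprod r (F i).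
Proof.
elim/big_rec2: _ => [|i x y _ H]; last by rewrite jprodD H.
by rewrite /jprod mulmx0 mul0mx addr0 scaler0.
Qed.

Lemma cj_half : cj (2%:R^-1) = 2%:R^-1 :> C.
Proof. by rewrite cjV cj_nat. Qed.

Lemma dag_jprod n (r A : 'M[C]_n) : herm r -> dag (jprod r A) = jprod r (dag A).
Proof.
move=> hr; rewrite /jprod dagZ cj_half dagD !dagM hr addrC //.
Qed.

Lemma entry_sym n (r : 'rV[C]_n) (Y : 'M[C]_n) a b :
  (diag_mx r *m Y + Y *m diag_mx r) a b = (r 0 a + r 0 b) * Y a b.
Proof. by rewrite mul_diag_mx mul_mx_diag !mxE mulrDl [Y a b * _]mulrC. Qed.

Lemma jprod_eig n (U Y' : 'M[C]_n) (r : 'rV[C]_n) :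
  dag U *m U = 1%:M -> U *m dag U = 1%:M ->
  jprod (dag U *m diag_mx r *m U) (dag U *m Y' *m U)
  = dag U *m (2%:R^-1 *: (diag_mx r *m Y' + Y' *m diag_mx r)) *m U.
Proof.
move=> h1 h2; rewrite /jprod -scalemxAr -scalemxAl; congr (_ *: _).
rewrite mulmxDr mulmxDl; congr (_ + _).
  by rewrite -!mulmxA; congr (_ *m _); rewrite !mulmxA -(mulmxA _ U) h2 mulmx1.
by rewrite -!mulmxA; congr (_ *m _); rewrite !mulmxA -(mulmxA _ U) h2 mulmx1.
Qed.

Lemma lyap_exists n (rho M : 'M[C]_n) : posdef rho -> exists Y, jprod rho Y = M.
Proof.
move=> pr; have [U [r [h1 h2 E]]] := herm_spec pr.1.
have rp := posdef_spec_gt0 pr h2 E.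
set M' := U *m M *m dag U.
exists (dag U *m (\matrix_(a, b) (2%:R * M' a b / (r 0 a + r 0 b))) *m U).
rewrite E jprod_eig //.
have -> : 2%:R^-1 *: (diag_mx r *m \matrix_(a, b) (2%:R * M' a b / (r 0 a + r 0 b))
    + \matrix_(a, b) (2%:R * M' a b / (r 0 a + r 0 b)) *m diag_mx r) = M'.
  apply/matrixP=> a b; rewrite mxE entry_sym mxE.
  have ne : r 0 a + r 0 b != 0 by rewrite gt_eqF // addr_gt0.
  rewrite [_ * (_ / _)]mulrC divfK // mulrA mulVf ?mul1r //.
  by rewrite pnatr_eq0.
by rewrite /M' !mulmxA h1 mul1mx -mulmxA h1 mulmx1.
Qed.

Lemma lyap_inj n (rho Y : 'M[C]_n) : posdef rho -> jprod rho Y = 0 -> Y = 0.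
Proof.
move=> pr; have [U [r [h1 h2 E]]] := herm_spec pr.1.
have rp := posdef_spec_gt0 pr h2 E.
set Y' := U *m Y *m dag U.
have YE : Y = dag U *m Y' *m U by rewrite /Y' !mulmxA h1 mul1mx -mulmxA h1 mulmx1.
rewrite E YE jprod_eig // => h.
have h' : 2%:R^-1 *: (diag_mx r *m Y' + Y' *m diag_mx r) = 0.
  have := congr1 (fun A => U *m A *m dag U) h.
  by rewrite /= mulmx0 mul0mx !mulmxA h2 mul1mx -mulmxA h2 mulmx1.
have -> : Y' = 0.
  apply/matrixP=> a b; move/matrixP: h' => /(_ a b); rewrite mxE entry_sym !mxE.
  have ne : r 0 a + r 0 b != 0 by rewrite gt_eqF // addr_gt0.
  move/eqP; rewrite !mulf_eq0 invr_eq0 pnatr_eq0 (negbTE ne) /=.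
  by move/eqP.
by rewrite mulmx0 mul0mx.
Qed.

Lemma Dop_exists n (rho X : 'M[C]_n) : posdef rho -> herm X ->
  exists Y, is_Dop rho X Y.
Proof.
move=> pr hX; set M := 'i *: (X *m rho - rho *m X).
have [Y hY] := lyap_exists M pr.
exists Y; split => //.
have hM : dag M = M.
  rewrite /M dagZ dagB !dagM hX pr.1 cj_i scaleNr -scalerN opprB //.
have : jprod rho (dag Y - Y) = 0.
  by rewrite jprodD jprodN -(dag_jprod Y pr.1) hY hM subrr.
by move/(lyap_inj pr)/eqP; rewrite subr_eq0 => /eqP.
Qed.

Lemma posdef_unit n (rho : 'M[C]_n) : posdef rho -> rho \in unitmx.
Proof.
move=> pr; have [U [r [h1 h2 E]]] := herm_spec pr.1.
have rp := posdef_spec_gt0 pr h2 E.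
suff hh : rho *m (dag U *m diag_mx (\row_j (r 0 j)^-1) *m U) = 1%:M.
  by case: (mulmx1_unit hh).
rewrite E -!mulmxA [U *m (dag U *m _)]mulmxA h2 mul1mx.
rewrite [diag_mx _ *m (diag_mx _ *m _)]mulmxA mulmx_diag.
have -> : \row_j (r 0 j * (\row_j0 (r 0 j0)^-1) 0 j) = const_mx 1.
  by apply/rowP=> j; rewrite !mxE mulfV // gt_eqF.
by rewrite diag_const_mx mul1mx.
Qed.

End Q7.
Section Q8.
Variable R : realType.
Local Notation C := R[i].
Local Notation cj := (@conjc R).

Lemma unit_of_inj n (J : 'M[C]_n) :
  (forall v : 'cV[C]_n, J *m v = 0 -> v = 0) -> J \in unitmx.
Proof.
move=> hJ; rewrite -unitmx_tr -row_free_unit -kermx_eq0; apply/eqP.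
apply/row_matrixP => i; rewrite row0.
have h : row i (kermx J^T) *m J^T = 0 by rewrite -row_mul mulmx_ker row0.
have : J *m (row i (kermx J^T))^T = 0.
  by have := congr1 trmx h; rewrite trmx_mul trmxK trmx0.
by move/hJ => /(congr1 trmx); rewrite trmxK trmx0.
Qed.

Lemma tr_linr N d (A : 'M[C]_N) (b : 'I_d -> C) (B : 'I_d -> 'M[C]_N) :
  \tr (A *m \sum_j b j *: B j) = \sum_j b j * \tr (A *m B j).
Proof.
rewrite mulmx_sumr raddf_sum; apply: eq_bigr => j _.
by rewrite -scalemxAr; exact: mxtraceZ.
Qed.

Lemma tr_linm N d (A M : 'M[C]_N) (b : 'I_d -> C) (B : 'I_d -> 'M[C]_N) :
  \tr (A *m (\sum_j b j *: B j) *m M) = \sum_j b j * \tr (A *m B j *m M).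
Proof.
rewrite mulmx_sumr mulmx_suml raddf_sum; apply: eq_bigr => j _.
by rewrite -scalemxAr -scalemxAl; exact: mxtraceZ.
Qed.

Lemma diag_entry_quad N (F rho : 'M[C]_N) c :
  (dag F *m rho *m F) c c = (dag (col c F) *m rho *m col c F) 0 0.
Proof.
rewrite !mxE; apply: eq_bigr => j _; rewrite !mxE; congr (_ * _).
by apply: eq_bigr => k _; rewrite !mxE.
Qed.

Lemma tr_pos_zero N (rho F : 'M[C]_N) : posdef rho ->
  \tr (rho *m F *m dag F) = 0 -> F = 0.
Proof.
move=> pr; rewrite mxtrace_mulC mulmxA => h.
have ge : forall c, 0 <= (dag F *m rho *m F) c c.
  move=> c; rewrite diag_entry_quad.
  case: (eqVneq (col c F) 0) => [->|ne]; last by apply/ltW/pr.2.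
  by rewrite mulmx0 mxE.
have z := psumr_eq0P (fun c _ => ge c) h.
apply/matrixP=> a c; rewrite mxE.
case: (eqVneq (col c F) 0) => [/matrixP /(_ a 0)|ne]; first by rewrite !mxE.
have := pr.2 _ ne; rewrite -diag_entry_quad z //.
by rewrite ltxx.
Qed.

Lemma real_split d N (D : 'I_d -> 'M[C]_N) : (forall l, herm (D l)) ->
  (forall c : 'I_d -> R, \sum_l (c l)%:C *: D l = 0 -> forall l, c l = 0) ->
  forall v : 'I_d -> C, \sum_l v l *: D l = 0 -> forall l, v l = 0.
Proof.
move=> hD hreg v hv.
set A := \sum_l (complex.Re (v l))%:C *: D l.
set B := \sum_l (complex.Im (v l))%:C *: D l.
have SE : \sum_l v l *: D l = A + 'i *: B.
  rewrite /A /B scaler_sumr -big_split /=; apply: eq_bigr => l _.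
  by rewrite scalerA -scalerDl -complexE.
have hA : dag A = A.
  by rewrite /A dag_sum; apply: eq_bigr => l _; rewrite dagZ cj_real hD.
have hB : dag B = B.
  by rewrite /B dag_sum; apply: eq_bigr => l _; rewrite dagZ cj_real hD.
have e1 : A + 'i *: B = 0 by rewrite -SE.
have e2 : A - 'i *: B = 0.
  by have := congr1 (@dag R N N) e1; rewrite dagD dagZ hA hB cj_i scaleNr dag0.
have A0 : A = 0.
  have : 2%:R^-1 *: ((A + 'i *: B) + (A - 'i *: B)) = A.
    rewrite addrACA subrr addr0 scalerDr -scalerDl.
    have -> : (2%:R^-1 + 2%:R^-1 : C) = 1.
      by rewrite -mulr2n -(mulr_natr (2%:R^-1 : C) 2) mulVf // pnatr_eq0.
    by rewrite scale1r.
  by rewrite e1 e2 addr0 scaler0 => <-.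
have B0 : B = 0.
  have : (- 'i) *: ('i *: B) = B.
    by rewrite scalerA mulNr -expr2 sqr_i opprK scale1r.
  have iB : 'i *: B = 0 by move: e1; rewrite A0 add0r.
  by rewrite iB scaler0 => <-.
have hre := hreg _ A0; have him := hreg _ B0.
by move=> l; rewrite [v l]complexE hre him mulr0 addr0.
Qed.

End Q8.
Section Q9.
Variable R : realType.
Local Notation C := R[i].
Local Notation cj := (@conjc R).

Lemma rhoX_jprod N (rho X Y : 'M[C]_N) : is_Dop rho X Y ->
  rho *m X = jprod rho (X + ('i / 2%:R) *: Y).
Proof.
move=> [_ hY]; rewrite jprodD jprodZ hY scalerA.
have -> : 'i / 2%:R * 'i = - 2%:R^-1 :> C.
  by rewrite mulrAC -expr2 sqr_i mulN1r.
rewrite /jprod scaleNr -scalerN opprB -scalerDr addrACA.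
rewrite subrr addr0 scalerDr -scalerDl.
have -> : (2%:R^-1 + 2%:R^-1 : C) = 1.
  by rewrite -mulr2n -(mulr_natr (2%:R^-1 : C) 2) mulVf // pnatr_eq0.
by rewrite scale1r.
Qed.

Lemma X_in_Lt d N (rho X : 'M[C]_N) (D L Lt : 'I_d -> 'M[C]_N) :
  posdef rho -> (forall l, is_SLD rho (D l) (L l)) ->
  (forall l, is_RLD rho (D l) (Lt l)) -> D_invariant rho L ->
  herm X -> in_real_span L X ->
  exists w : 'I_d -> C, X = \sum_l w l *: Lt l.
Proof.
move=> pr hS hR hDI hX hspan.
have [Y hY] := Dop_exists pr hX.
have [e he] := hDI X Y hspan hY.
case: hspan => c hc.
exists (fun l => (c l)%:C + ('i / 2%:R) * (e l)%:C).
have E : rho *m X = rho *m \sum_l ((c l)%:C + ('i / 2%:R) * (e l)%:C) *: Lt l.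
  rewrite (rhoX_jprod hY) hc he scaler_sumr -big_split /= jprod_sum mulmx_sumr.
  apply: eq_bigr => l _.
  rewrite scalerA -scalerDl jprodZ -(hS l).2 (hR l) scalemxAr //.
by rewrite -[X](mulKmx (posdef_unit pr)) E mulKmx // posdef_unit.
Qed.

Lemma tr_bil N d (rho : 'M[C]_N) (a b : 'I_d -> C) (A B : 'I_d -> 'M[C]_N) :
  \tr (rho *m (\sum_k a k *: A k) *m (\sum_j b j *: B j))
  = \sum_k \sum_j a k * b j * \tr (rho *m A k *m B j).
Proof.
rewrite tr_linm; apply: eq_bigr => k _; rewrite tr_linr mulr_sumr.
by apply: eq_bigr => j _; rewrite mulrA.
Qed.

Lemma Jt_unit d N (rho : 'M[C]_N) (D Lt : 'I_d -> 'M[C]_N) : posdef rho ->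
  (forall l, herm (D l)) ->
  (forall c : 'I_d -> R, \sum_l (c l)%:C *: D l = 0 -> forall l, c l = 0) ->
  (forall l, is_RLD rho (D l) (Lt l)) -> RLD_fisher rho Lt \in unitmx.
Proof.
move=> pr hD hreg hR; apply: unit_of_inj => v Jv.
set F := \sum_k v k 0 *: Lt k.
have dF : dag F = \sum_j cj (v j 0) *: dag (Lt j).
  by rewrite /F dag_sum; apply: eq_bigr => j _; rewrite dagZ.
have q0 : (dag v *m RLD_fisher rho Lt *m v) 0 0 = 0 by rewrite -mulmxA Jv mulmx0 mxE.
have F0 : F = 0.
  apply: (tr_pos_zero pr); rewrite -q0 dF /F tr_bil mxE.
  apply: eq_bigr => k _; rewrite mxE mulr_suml; apply: eq_bigr => j _.
  by rewrite /RLD_fisher !mxE [RHS]mulrAC [_ * v k 0]mulrC.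
have hz : \sum_k v k 0 *: D k = 0.
  transitivity (rho *m F); last by rewrite F0 mulmx0.
  by rewrite /F mulmx_sumr; apply: eq_bigr => k _; rewrite hR scalemxAr.
apply/matrixP=> k i; rewrite ord1 mxE.
by rewrite (real_split hD hreg hz k).
Qed.

End Q9.
Section Q10.
Variable R : realType.
Local Notation C := R[i].
Local Notation cj := (@conjc R).

Lemma cplxM_psd n (G : 'M[R]_n) : real_sym_posdef G -> psd (cplxM G).
Proof.
move=> [sG pG].
have cE : forall m p (A : 'M[R]_(m,p)), cplxM A = map_mx (real_complex R) A.
  by move=> m p A; apply/matrixP=> i j; rewrite !mxE.
have G0T : (cplxM G)^T = cplxM G.
  by apply/matrixP=> i j; rewrite !mxE -[in RHS]sG mxE.
have dR : forall m p (A : 'M[R]_(m,p)), dag (cplxM A) = cplxM A^T.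
  by move=> m p A; apply/matrixP=> i j; rewrite !mxE cj_real.
split; first by rewrite /herm dR sG.
move=> v.
pose f (x y : 'cV[C]_n) := (dag x *m cplxM G *m y) 0 0.
have fDl : forall x y z, f (x + y) z = f x z + f y z.
  by move=> x y z; rewrite /f dagD !mulmxDl mxE.
have fDr : forall x y z, f z (x + y) = f z x + f z y.
  by move=> x y z; rewrite /f mulmxDr mxE.
have fZl : forall c x z, f (c *: x) z = cj c * f x z.
  by move=> c x z; rewrite /f dagZ -!scalemxAl mxE.
have fZr : forall c x z, f z (c *: x) = c * f z x.
  by move=> c x z; rewrite /f -scalemxAr mxE.
have q0 : forall x : 'cV[R]_n, 0 <= (x^T *m G *m x) 0 0.
  move=> x; case: (eqVneq x 0) => [->|ne]; last exact/ltW/pG.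
  by rewrite mulmx0 mxE.
have fR : forall x : 'cV[R]_n, f (cplxM x) (cplxM x) = ((x^T *m G *m x) 0 0)%:C.
  by move=> x; rewrite /f dR !cE -!map_mxM mxE.
have fS : forall x y : 'cV[R]_n, f (cplxM y) (cplxM x) = f (cplxM x) (cplxM y).
  have t11 : forall M : 'M[C]_1, M 0 0 = M^T 0 0 by move=> M; rewrite mxE.
  have cT : forall m p (A : 'M[R]_(m,p)), (cplxM A)^T = cplxM A^T.
    by move=> m p A; apply/matrixP=> i j; rewrite !mxE.
  move=> x y; rewrite /f !dR [LHS]t11 !trmx_mul G0T !cT !trmxK.
  by rewrite mulmxA.
set a := map_mx (@complex.Re R) v; set b := map_mx (@complex.Im R) v.
have vE : v = cplxM a + 'i *: cplxM b.
  by apply/matrixP=> i j; rewrite !mxE -complexE.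
have -> : (dag v *m cplxM G *m v) 0 0 = f v v by [].
rewrite vE fDl !fDr !fZl !fZr fS fR fR cj_i.
have -> : forall (p q x : C), p + 'i * x + (- 'i * x + - 'i * ('i * q)) = p + q.
  have ii : 'i * 'i = -1 :> C by rewrite -expr2 sqr_i.
  move=> p q x; rewrite mulrA !mulNr ii mulN1r opprK.
  by rewrite addrA addrK.
by rewrite -rmorphD /= lecR addr_ge0.
Qed.

End Q10.
Unset Implicit Arguments.
Theorem mainTheorem3 (R : realType) (N d1 d2 : nat)
  (Theta2 : set 'rV[R]_d2) (rho : 'rV[R]_d2 -> 'M[R[i]]_N)
  (theta : 'rV[R]_d2)
  (L Lt : 'I_d2 -> 'M[R[i]]_N) (X : 'I_d1 -> 'M[R[i]]_N) (G : 'M[R]_d1) :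
  (* S_2 : a quantum statistical model on the open set Theta2 *)
  open Theta2 ->
  (forall t, Theta2 t -> strictly_pos_density (rho t)) ->
  (forall (i j : 'I_N) t, Theta2 t ->
     differentiable (fun s => @complex.Re R (rho s i j)) t /\
     differentiable (fun s => @complex.Im R (rho s i j)) t) ->
  (* the model is regular at theta: the partial derivatives are linearly independent *)
  (forall c : 'I_d2 -> R,
     \sum_(l < d2) (c l)%:C *: pderiv rho theta l = 0 -> forall l, c l = 0) ->
  (* submodel S_1 : theta = (theta_1, ..., theta_{d1}, 0, ..., 0) *)
  (d1 <= d2)%N ->
  Theta2 theta ->
  (forall l : 'I_d2, (d1 <= l)%N -> theta 0 l = 0) ->
  (* SLDs and RLDs of S_2 at theta *)
  (forall l, is_SLD (rho theta) (pderiv rho theta l) (L l)) ->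
  (forall l, is_RLD (rho theta) (pderiv rho theta l) (Lt l)) ->
  (* D-invariance of S_2 at theta *)
  D_invariant (rho theta) L ->
  (* the estimator observables X *)
  (forall j, herm (X j)) ->
  (forall j, in_real_span L (X j)) ->
  (forall (j : 'I_d1) (k : 'I_d2), (k < d1)%N ->
     \tr (pderiv rho theta k *m X j) = ((j == k :> nat)%:R : R[i])) ->
  (* weight G *)
  real_sym_posdef G ->
  let P : 'M[R[i]]_(d1, d2) :=
    \matrix_(k, l) \tr (pderiv rho theta l *m X k) in
  C_bound (rho theta) (cplxM G) X
  = RLD_bound (rho theta) Lt (P^T *m cplxM G *m P).
Proof.
move=> _ hpos _ hreg _ hT _ hSLD hRLD hDI hXh hXspan _ hG P.
have pr : posdef (rho theta) := (hpos theta hT).1.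
have hDh : forall l, herm (pderiv rho theta l).
  by move=> l; rewrite /herm (hSLD l).2 (dag_jprod (L l) pr.1) (hSLD l).1.
have hJ := Jt_unit pr hDh hreg hRLD.
set J := RLD_fisher (rho theta) Lt in hJ *.
have hw : forall k, exists w : 'I_d2 -> R[i], X k = \sum_l w l *: Lt l.
  by move=> k; apply: (X_in_Lt pr hSLD hRLD hDI (hXh k) (hXspan k)).
have [w hw'] := boolp.choice hw.
pose W : 'M[R[i]]_(d1, d2) := \matrix_(k, l) w k l.
have hXd : forall k, X k = \sum_l (@conjc R (w k l)) *: dag (Lt l).
  move=> k; rewrite -{1}(hXh k) {1}hw' dag_sum.
  by apply: eq_bigr => l _; rewrite dagZ.
have cP : conjM P = P.
  apply/matrixP=> k l; rewrite /P !mxE -tr_dag dagM (hXh k) (hDh l).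
  exact: mxtrace_mulC.
have PW : P = conjM W *m J.
  apply/matrixP=> k l; rewrite /P !mxE (hRLD l) {1}(hXd k) tr_linr.
  by apply: eq_bigr => m _; rewrite /J /W !mxE.
have ZW : Zmat (rho theta) X = W *m J^T *m dag W.
  apply/matrixP=> k j; rewrite /Zmat !mxE {1}(hw' k) (hXd j) tr_bil.
  rewrite (exchange_big _ _ _ _ _ _) /=.
  apply: eq_bigr => l _; rewrite !mxE mulr_suml; apply: eq_bigr => m _.
  by rewrite /J /W !mxE [RHS]mulrAC.
have WE : W = P *m conjM (invmx J).
  have : conjM W = P *m invmx J by rewrite PW mulmxK.
  by move/(congr1 (@conjM R _ _)); rewrite conjMK conjM_mul cP.
have ZE : Zmat (rho theta) X = P *m conjM (invmx J) *m P^T.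
  rewrite ZW WE dagM /dag conjMK cP -!mulmxA; congr (_ *m (_ *m _)).
  by rewrite mulmxA -trmx_mul mulVmx // trmx1 mul1mx.
rewrite /C_bound ZE holevo_transform //; last exact: cplxM_psd.
Qed.
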